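(* Let $R$ be a suitable ring with a nice topology, and suppose that convergent limits of units are units, i.e. whenever a net of units of $R$ converges to an element $w\in R$, $w$ is a unit. Then $R$ is an $\aleph_0$-exchange ring.
   Context: A ring $R$ is suitable if whenever $x+y=1$ in $R$ there are orthogonal idempotents $e\in Rx$, $f\in Ry$ with $e+f=1$. A linear Hausdorff topology on $R$ is a ring topology with a basis $\mathfrak U$ of neighborhoods of $0$ consisting of left ideals, with $\bigcap_{U\in\mathfrak U}U=0$. A family $\{x_i\}_{i\in I}\subseteq R$ is summable to $r$ if for every $U\in\mathfrak U$ there is a finite $F'\subseteq I$ with $\sum_{i\in F}x_i-r\in U$ for all finite $F$ with $F'\subseteq F\subseteq I$ (write $\sum_{i\in I}x_i=r$; the family is then called summable). The topology is nice if it is linear, Hausdorff, and for every summable family $\{x_i\}_{i\in I}$ and every family $\{r_i\}_{i\in I}\subseteq R$ the family $\{r_ix_i\}_{i\in I}$ is summable. For a cardinal $\aleph$, $R$ is an $\aleph$-exchange ring if for every family $\{x_i\}_{i\in I}$ with $|I|\le\aleph$ summable to $1$ there exist pairwise orthogonal idempotents $e_i\in Rx_i$ forming a summable family with $\sum_{i\in I}e_i=1$. *)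

(* Defs.v *)
From mathcomp Require Import all_boot all_algebra.
From Stdlib Require Import List.
Set Implicit Arguments. Unset Strict Implicit. Unset Printing Implicit Defensive.
Import GRing.Theory.
Local Open Scope ring_scope.

Section Defs.
Variable R : pzRingType.

Definition is_unit (u : R) : Prop := exists v : R, u * v = 1 /\ v * u = 1.

Definition idempotent (e : R) : Prop := e * e = e.

Definition in_left_principal (e x : R) : Prop := exists r : R, e = r * x.

Definition suitable : Prop :=
  forall x y : R, x + y = 1 ->
    exists e f : R, idempotent e /\ idempotent f /\ e * f = 0 /\ f * e = 0 /\
      in_left_principal e x /\ in_left_principal f y /\ e + f = 1.

Definition left_ideal (U : R -> Prop) : Prop :=
  U 0 /\ (forall a b, U a -> U b -> U (a + b)) /\ (forall r a, U a -> U (r * a)).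

(* A linear Hausdorff ring topology on R, given by its basis B of
   neighbourhoods of 0 (the neighbourhoods of x are the sets containing x + U,
   U in B). *)
Record linear_hausdorff (B : (R -> Prop) -> Prop) : Prop := {
  lh_nonempty : exists U, B U;
  lh_directed : forall U V, B U -> B V ->
      exists W, B W /\ (forall x, W x -> U x /\ V x);
  lh_left_ideal : forall U, B U -> left_ideal U;
  (* continuity of right multiplication (ring topology axiom not implied
     by the other ones) *)
  lh_right_mul : forall U (a : R), B U -> exists V, B V /\ (forall x, V x -> U (x * a));
  lh_hausdorff : forall x : R, (forall U, B U -> U x) -> x = 0
}.

(* finite subsets of an index type I, as duplicate-free lists *)
Definition summable_to (B : (R -> Prop) -> Prop) (I : Type) (x : I -> R) (r : R)
  : Prop :=
  forall U, B U ->
    exists F' : list I, NoDup F' /\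
      forall F : list I, NoDup F -> (forall i, In i F' -> In i F) ->
        U ((\sum_(i <- F) x i) - r).

Definition summable (B : (R -> Prop) -> Prop) (I : Type) (x : I -> R) : Prop :=
  exists r, summable_to B x r.

Definition nice (B : (R -> Prop) -> Prop) : Prop :=
  linear_hausdorff B /\
  forall (I : Type) (x : I -> R) (r : I -> R),
    summable B x -> summable B (fun i => r i * x i).

Definition directed_set (D : Type) (le : D -> D -> Prop) : Prop :=
  (exists d : D, True) /\ (forall a, le a a) /\
  (forall a b c, le a b -> le b c -> le a c) /\
  (forall a b, exists c, le a c /\ le b c).

Definition net_converges (B : (R -> Prop) -> Prop) (D : Type)
  (le : D -> D -> Prop) (x : D -> R) (w : R) : Prop :=
  forall U, B U -> exists d0, forall d, le d0 d -> U (x d - w).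

Definition limits_of_units_are_units (B : (R -> Prop) -> Prop) : Prop :=
  forall (D : Type) (le : D -> D -> Prop) (x : D -> R) (w : R),
    directed_set le -> (forall d, is_unit (x d)) -> net_converges B le x w ->
    is_unit w.

Definition countable_index (I : Type) : Prop :=
  exists f : I -> nat, forall i j, f i = f j -> i = j.

Definition aleph0_exchange (B : (R -> Prop) -> Prop) : Prop :=
  forall (I : Type) (x : I -> R), countable_index I -> summable_to B x 1 ->
    exists e : I -> R,
      (forall i, idempotent (e i)) /\
      (forall i, in_left_principal (e i) (x i)) /\
      (forall i j, i <> j -> e i * e j = 0) /\
      summable_to B e 1.

End Defs.

(* Main.v *)
From Stdlib Require Import List ClassicalEpsilon Classical.
From mathcomp Require Import all_boot all_algebra.
Require Import Defs.
Set Implicit Arguments. Unset Strict Implicit. Unset Printing Implicit Defensive.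
Import GRing.Theory.
Local Open Scope ring_scope.

Lemma InP (T : eqType) (x : T) (s : seq T) : List.In x s <-> x \in s.
Proof.
elim: s => [|a s IH] /=; first by split => //.
rewrite in_cons; split.
- by case=> [->|/IH ->]; rewrite ?eqxx ?orbT.
- by case/orP => [/eqP ->|/IH]; auto.
Qed.

Lemma NoDupP (T : eqType) (s : seq T) : NoDup s <-> uniq s.
Proof.
elim: s => [|a s IH] /=; first by split => // _; constructor.
split.
- move=> H; inversion H; subst; apply/andP; split; last by apply/IH.
  by apply/negP => /InP.
- case/andP => Ha Hs; constructor; last by apply/IH.
  by move/InP; apply/negP.
Qed.

Lemma In_cat (T : Type) (x : T) (s1 s2 : seq T) :
  List.In x (s1 ++ s2) <-> List.In x s1 \/ List.In x s2.
Proof.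
elim: s1 => [|a s IH] /=; first by tauto.
rewrite IH; tauto.
Qed.

Lemma In_map (T U : Type) (f : T -> U) (y : U) (s : seq T) :
  List.In y (map f s) <-> exists x, List.In x s /\ f x = y.
Proof.
elim: s => [|a s IH] /=; first by split => // [[x []]].
rewrite IH; split.
- case=> [<-|[x [Hx <-]]]; eauto.
- case=> x [[->|Hx] <-]; eauto.
Qed.

Lemma In_pmap (T U : Type) (f : T -> option U) (y : U) (s : seq T) :
  List.In y (pmap f s) <-> exists x, List.In x s /\ f x = Some y.
Proof.
elim: s => [|a s IH]; first by split => // [[x []]].
rewrite /=; case E: (f a) => [b|] /=; rewrite IH; split.
- case=> [<-|[x [Hx Hy]]]; [exists a; tauto | exists x; tauto].
- case=> x [[<-|Hx] Hy]; [left; congruence | right; eauto].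
- case=> x [Hx Hy]; exists x; tauto.
- case=> x [[<-|Hx] Hy]; [congruence | eauto].
Qed.

Lemma In_filter (T : Type) (p : pred T) (y : T) (s : seq T) :
  List.In y (filter p s) <-> List.In y s /\ p y.
Proof.
elim: s => [|a s IH] /=; first by tauto.
case E: (p a) => /=; rewrite IH.
- split; first by case=> [<-|[? ?]]; auto.
  by case=> [[<-|?] ?]; auto.
- split; first by case=> [? ?]; auto.
  by case=> [[<-|?] ?]; [congruence|auto].
Qed.

Lemma NoDup_cat (T : Type) (s1 s2 : seq T) :
  NoDup s1 -> NoDup s2 -> (forall x, List.In x s1 -> ~ List.In x s2) ->
  NoDup (s1 ++ s2).
Proof.
elim: s1 => [|a s IH] //= H1 H2 Hd.
inversion H1; subst; constructor.
- rewrite In_cat => [[|]]; first by [].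
  by apply: Hd; left.
- apply: IH => // x Hx; apply: Hd; right; exact: Hx.
Qed.

Lemma NoDup_filter (T : Type) (p : pred T) (s : seq T) :
  NoDup s -> NoDup (filter p s).
Proof.
elim: s => [|a s IH] /= H; first by constructor.
inversion H; subst; case: (p a); last by auto.
constructor; last by auto.
by rewrite In_filter => [[]].
Qed.

Lemma NoDup_map_inj (T U : Type) (f : T -> U) (s : seq T) :
  (forall a b, f a = f b -> a = b) -> NoDup s -> NoDup (map f s).
Proof.
move=> Hf; elim: s => [|a s IH] /= H; first by constructor.
inversion H; subst; constructor; last by auto.
by rewrite In_map => [[x [Hx /Hf E]]]; subst.
Qed.
Section Topo.
Variable R : pzRingType.
Variable B : (R -> Prop) -> Prop.
Hypothesis lh : linear_hausdorff B.

Lemma U0 U : B U -> U 0.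
Proof. by move=> /(lh_left_ideal lh) [H _]. Qed.
Lemma UD U a b : B U -> U a -> U b -> U (a + b).
Proof. by move=> /(lh_left_ideal lh) [_ [H _]]; apply: H. Qed.
Lemma UM U r a : B U -> U a -> U (r * a).
Proof. by move=> /(lh_left_ideal lh) [_ [_ H]]; apply: H. Qed.
Lemma UN U a : B U -> U a -> U (- a).
Proof. by move=> HU Ha; rewrite -mulN1r; apply: UM. Qed.
Lemma UB U a b : B U -> U a -> U b -> U (a - b).
Proof. by move=> HU Ha Hb; apply: UD => //; apply: UN. Qed.

Lemma summable_lmul (I : Type) (z : I -> R) r a :
  summable_to B z r -> summable_to B (fun i => a * z i) (a * r).
Proof.
move=> H U HU; have [F' [HF' HF]] := H U HU; exists F'; split => // F HnF HinF.
rewrite -mulr_sumr -mulrBr; apply: UM => //; exact: HF.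
Qed.

Lemma summable_rmul (I : Type) (z : I -> R) r a :
  summable_to B z r -> summable_to B (fun i => z i * a) (r * a).
Proof.
move=> H U HU; have [V [HV HVU]] := lh_right_mul lh a HU.
have [F' [HF' HF]] := H V HV; exists F'; split => // F HnF HinF.
rewrite -mulr_suml -mulrBl; apply: HVU; exact: HF.
Qed.

Lemma sum_unique (z : nat -> R) a b :
  summable_to B z a -> summable_to B z b -> a = b.
Proof.
move=> Ha Hb; apply/eqP; rewrite -subr_eq0; apply/eqP.
apply: (lh_hausdorff lh) => U HU.
have [F1 [_ H1]] := Ha U HU; have [F2 [_ H2]] := Hb U HU.
set F := undup (F1 ++ F2).
have HnF : NoDup F by apply/NoDupP; apply: undup_uniq.
have Hin1 : forall i, List.In i F1 -> List.In i F.
  by move=> i /InP Hi; apply/InP; rewrite mem_undup mem_cat Hi.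
have Hin2 : forall i, List.In i F2 -> List.In i F.
  by move=> i /InP Hi; apply/InP; rewrite mem_undup mem_cat Hi orbT.
have := UB HU (H2 F HnF Hin2) (H1 F HnF Hin1).
by rewrite opprB addrC addrA subrK.
Qed.

Fixpoint bnd (s : seq nat) : nat :=
  if s is i :: s' then maxn i.+1 (bnd s') else 0%N.

Lemma bnd_lt s i : List.In i s -> (i < bnd s)%N.
Proof.
elim: s => [|a s IH] //= [->|/IH]; first by rewrite leq_maxl.
move=> H; exact: (leq_trans H (leq_maxr _ _)).
Qed.

Lemma partial_conv (z : nat -> R) r :
  summable_to B z r -> forall U, B U ->
  exists N, forall n, (N <= n)%N -> U (\sum_(0 <= i < n) z i - r).
Proof.
move=> H U HU; have [F' [_ HF]] := H U HU; exists (bnd F') => n Hn.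
apply: HF; first by apply/NoDupP; apply: iota_uniq.
move=> i /bnd_lt Hi; apply/InP; rewrite mem_iota /= subn0 add0n.
exact: leq_trans Hi Hn.
Qed.

End Topo.
Section Step.
Variable R : pzRingType.
Hypothesis Hs : suitable R.

Lemma step_ex (f m a y0 t' : R) : f * f = f -> f = m * f -> m = a * (y0 + t') ->
  exists k r f' a', k = r * y0 /\ f' * f' = f' /\ f' = a' * t' * f' /\
    f' * f = f' /\ f * f' = f' /\ k * f + f' = f.
Proof.
move=> Hff Hf Hm.
set X := a * y0 * f + (1 - f); set Y := a * t' * f.
have XY : X + Y = 1.
  rewrite /X /Y addrAC -mulrDl -mulrDr -Hm -Hf addrC subrK //.
have [E [G [HE [HG [HEG [HGE [[rho HEX] [[sig HGY] HEG1]]]]]]]] := Hs XY.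
rewrite /idempotent in HE HG.
have Gf : G * f = G by rewrite HGY /Y -!mulrA Hff.
exists (f * rho * a * y0), (f * rho * a), (f * G), (f * sig * a); split => //.
split; first by rewrite -mulrA (mulrA G) Gf HG.
split.
  have -> : f * sig * a * t' * (f * G) = f * (sig * (a * t' * f)) * G by rewrite !mulrA.
  by rewrite -/Y -HGY -mulrA HG.
split; first by rewrite -mulrA Gf.
split; first by rewrite mulrA Hff.
have -> : f * rho * a * y0 * f = f * E * f.
  rewrite HEX /X -!mulrA mulrDl mulrBl mul1r Hff subrr addr0.
  by rewrite -!mulrA Hff.
have -> : f * G = f * G * f by rewrite -mulrA Gf.
by rewrite -mulrDl -mulrDr HEG1 mulr1 Hff.
Qed.
End Step.
Lemma addid1 (V : zmodType) (o c e f p q : V) :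
  o + (c - e) + (p - f) = o + (q - (e + f)) + (c + p - q).
Proof.
rewrite -[LHS]addrA -[RHS]addrA; congr (_ + _).
rewrite [RHS]addrC [RHS]addrA subrK opprD addrACA //.
Qed.
Lemma addid1' (V : zmodType) (o c e f p q : V) :
  o + (p - f) + (c - e) = o + (q - (e + f)) + (c + p) - q.
Proof.
rewrite -[RHS]addrA -addid1 -[LHS]addrA -[RHS]addrA [p - f + _]addrC //.
Qed.
Lemma addid2 (V : zmodType) (s c q p: V) :
  s + c + p = s + q + (c + p - q).
Proof.
rewrite -[LHS]addrA -[RHS]addrA; congr (_ + _).
by rewrite [RHS]addrC subrK.
Qed.

Lemma unit_nil (R : pzRingType) (N : R) : N * N = 0 -> is_unit (1 + N).
Proof.
move=> HN; exists (1 - N); split.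
- by rewrite mulrDl mul1r mulrBr mulr1 HN subr0 subrK.
- by rewrite mulrDr mulr1 mulrBl mul1r HN subr0 subrK.
Qed.

Lemma unit_mul (R : pzRingType) (a b : R) : is_unit a -> is_unit b -> is_unit (a * b).
Proof.
move=> [a' [Ha1 Ha2]] [b' [Hb1 Hb2]]; exists (b' * a'); split.
- by rewrite -mulrA (mulrA b) Hb1 mul1r Ha1.
- by rewrite -mulrA (mulrA a') Ha2 mul1r Hb2.
Qed.

Section Construct.
Variable R : pzRingType.
Hypothesis Hs : suitable R.
Variable y : nat -> R.

Definition tl n : R := 1 - \sum_(0 <= i < n) y i.

Lemma tl_rec n : tl n = y n + tl n.+1.
Proof.
rewrite /tl big_nat_recr //= opprD [RHS]addrC addrA subrK //.
Qed.

Definition Inv n (f a : R) : Prop := f * f = f /\ f = a * tl n * f.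

Definition Pstep n (s : R * R) (o : R * R * R) : Prop :=
  Inv n s.1 s.2 ->
  (exists r, o.1.1 = r * y n) /\ o.1.2 * o.1.2 = o.1.2 /\
  o.1.2 = o.2 * tl n.+1 * o.1.2 /\ o.1.2 * s.1 = o.1.2 /\ s.1 * o.1.2 = o.1.2 /\
  o.1.1 * s.1 + o.1.2 = s.1.

Definition nxt n s := epsilon (inhabits (0 : R, 0 : R, 0 : R)) (Pstep n s).

Lemma nxt_spec n s : Pstep n s (nxt n s).
Proof.
apply: epsilon_spec; case: (classic (Inv n s.1 s.2)) => [[Hff Hf]|HN].
- have Hm : s.2 * tl n = s.2 * (y n + tl n.+1) by rewrite -tl_rec.
  have [k [r [f' [a' [Hk [H1 [H2 [H3 [H4 H5]]]]]]]]] := step_ex Hs Hff Hf Hm.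
  by exists (k, f', a') => _ /=; split; [exists r|].
- by exists (0, 0, 0).
Qed.

Fixpoint st n : R * R :=
  if n is n'.+1 then ((nxt n' (st n')).1.2, (nxt n' (st n')).2) else (1, 1).

Definition F n := (st n).1.
Definition A n := (st n).2.
Definition K n := (nxt n (st n)).1.1.
Definition M n := A n * tl n.
Definition e n := K n * F n.
Definition c n := e n * K n.

Lemma inv_all n : Inv n (F n) (A n).
Proof.
elim: n => [|n IH].
  rewrite /Inv /F /A /= /tl big_geq // subr0 !mulr1; split => //.
have [_ [H1 [H2 _]]] := nxt_spec IH.
by rewrite /Inv /F /A /=.
Qed.

Lemma Fidem n : F n * F n = F n.
Proof. by have [] := inv_all n. Qed.

Lemma MF n : M n * F n = F n.
Proof. by have [_ H] := inv_all n; rewrite /M -H. Qed.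

Lemma Kin n : exists r, K n = r * y n.
Proof. by have [] := nxt_spec (inv_all n). Qed.

Lemma FSF n : F n.+1 * F n = F n.+1.
Proof. by have [_ [_ [_ [H _]]]] := nxt_spec (inv_all n). Qed.

Lemma FFS n : F n * F n.+1 = F n.+1.
Proof. by have [_ [_ [_ [_ [H _]]]]] := nxt_spec (inv_all n). Qed.

Lemma eF n : e n = F n - F n.+1.
Proof.
have [_ [_ [_ [_ [_ H]]]]] := nxt_spec (inv_all n).
rewrite /e /K /F /=; rewrite -[in RHS]H; by rewrite addrK.
Qed.

Lemma Fmono i j : (i <= j)%N -> F j * F i = F j /\ F i * F j = F j.
Proof.
elim: j => [|j IH]; first by rewrite leqn0 => /eqP ->; rewrite Fidem.
rewrite leq_eqVlt => /orP [/eqP ->|]; first by rewrite Fidem.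
rewrite ltnS => /IH [H1 H2]; split.
- by rewrite -FSF -mulrA H1.
- by rewrite -FFS mulrA H2.
Qed.

Lemma eidem n : e n * e n = e n.
Proof.
rewrite eF mulrBl !mulrBr Fidem FFS FSF Fidem subrr subr0 //.
Qed.

Lemma eorth i j : i != j -> e i * e j = 0.
Proof.
rewrite neq_ltn => /orP [] H; rewrite !eF mulrBl !mulrBr.
- have [_ H1] := Fmono (ltnW H); have [_ H2] := Fmono H.
  have [_ H3] := Fmono (leqW (ltnW H)).
  have [_ H4] := Fmono (ltnW (H : (i.+1 < j.+1)%N)).
  by rewrite H1 H2 H3 H4 !subrr.
- have [H1 _] := Fmono (ltnW H); have [H2 _] := Fmono H.
  have [H3 _] := Fmono (leqW (ltnW H)).
  have [H4 _] := Fmono (ltnW (H : (j.+1 < i.+1)%N)).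
  by rewrite H1 H2 H3 H4 !subrr.
Qed.

Lemma KF i n : (i < n)%N -> K i * F n = 0.
Proof.
move=> H; have [_ H1] := Fmono (ltnW H); have [_ H2] := Fmono H.
by rewrite -H1 mulrA -/(e i) eF mulrBl H1 H2 subrr.
Qed.

Lemma Ke i j : (i <= j)%N -> K i * e j = e i * e j.
Proof.
move=> H; have [_ H1] := Fmono H.
have [_ H2] := Fmono (leqW H).
have E : e j = F i * e j by rewrite eF mulrBr H1 H2.
by rewrite {1}E mulrA -/(e i).
Qed.

Lemma eFS n : e n * F n.+1 = 0.
Proof. by rewrite eF mulrBl FFS Fidem subrr. Qed.

Lemma Fe n : F n * e n = e n.
Proof. by rewrite eF mulrBr Fidem FFS. Qed.

Lemma Fsplit n : F n = e n + F n.+1.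
Proof. by rewrite eF subrK. Qed.

Definition Uu n := 1 + e n * (K n - 1).
Definition Ww n := 1 + F n * (M n - 1).
Fixpoint T n := if n is n'.+1 then T n' * Uu n' else 1.

Lemma Uu_unit n : is_unit (Uu n).
Proof.
apply: unit_nil; rewrite -mulrA (mulrA (K n - 1)) mulrBl mul1r.
by rewrite Ke // eidem subrr mul0r mulr0.
Qed.

Lemma Ww_unit n : is_unit (Ww n).
Proof.
apply: unit_nil; rewrite -mulrA (mulrA (M n - 1)) mulrBl mul1r.
by rewrite MF subrr mul0r mulr0.
Qed.

Lemma T_unit n : is_unit (T n).
Proof.
elim: n => [|n IH] /=; first by exists 1; rewrite mulr1.
exact: unit_mul IH (Uu_unit n).
Qed.

Lemma UuF n m : (n < m)%N -> Uu n * F m = F m.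
Proof.
move=> H; rewrite /Uu mulrDl mul1r -mulrA mulrBl mul1r KF // sub0r mulrN.
have [_ H2] := Fmono H.
by rewrite eF mulrBl H2 (proj2 (Fmono (ltnW H))) subrr oppr0 addr0.
Qed.

Lemma TF n : T n * F n = F n.
Proof.
elim: n => [|n IH] /=; first by rewrite mul1r.
by rewrite -mulrA UuF // -FFS mulrA IH.
Qed.

Definition V n := \sum_(0 <= i < n) c i + F n * M n.

Lemma VT n : T n * Ww n = V n.
Proof.
elim: n => [|n IH].
  by rewrite /= mul1r /Ww /V big_geq // add0r /F /= !mul1r addrC subrK.
set D := c n + F n.+1 * M n.+1 - F n * M n.
have HUW : Uu n * Ww n.+1 = Ww n + D.
  have NP : e n * (K n - 1) * (F n.+1 * (M n.+1 - 1)) = 0.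
    by rewrite mulrA -(mulrA (e n)) mulrBl mul1r KF // sub0r mulrN eFS oppr0 !mul0r.
  rewrite /Uu /Ww.
  move: NP; set N := e n * (K n - 1); set P := F n.+1 * (M n.+1 - 1) => NP.
  rewrite mulrDl mul1r mulrDr mulr1 NP addr0 addrA /N /P.
  rewrite mulrBr mulr1 -/(c n) mulrBr mulr1 /D.
  rewrite mulrBr mulr1 {2}(Fsplit n).
  exact: addid1'.
have HD : T n * D = D.
  have -> : D = F n * D.
    rewrite /D !mulrDr mulrN /c (mulrA (F n) (e n)) Fe (mulrA (F n) (F n.+1)) FFS.
    by rewrite (mulrA (F n) (F n)) Fidem.
  by rewrite mulrA TF.
rewrite /= -mulrA HUW mulrDr IH HD /V big_nat_recr //=.
symmetry; rewrite /D; exact: (addid2 _ _ (F n * M n)).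
Qed.

End Construct.
Section Final.
Variable R : pzRingType.
Variable B : (R -> Prop) -> Prop.
Hypothesis Hs : suitable R.
Hypothesis Hn : nice B.
Hypothesis Hlim : limits_of_units_are_units B.
Variable y : nat -> R.
Hypothesis hy : summable_to B y 1.

Let lh : linear_hausdorff B := proj1 Hn.

Lemma summable_ext (I : Type) (z z' : I -> R) r :
  (forall i, z i = z' i) -> summable_to B z r -> summable_to B z' r.
Proof.
move=> E H U HU; have [F' [HF' HF]] := H U HU; exists F'; split => // F HnF HinF.
have := HF F HnF HinF; congr (U (_ - _)); apply: eq_bigr => i _; exact: E.
Qed.

Lemma single_sum (z : nat -> R) j :
  (forall i, i != j -> z i = 0) -> summable_to B z (z j).
Proof.
move=> Hz U HU; exists [:: j]; split; first by constructor => //; constructor.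
move=> F HnF HinF.
have Hj : j \in F by apply/InP; apply: HinF; left.
have HuF : uniq F by apply/NoDupP.
rewrite (bigD1_seq j Hj HuF) big1_seq; last by move=> i /andP [/Hz].
have -> : Algebra.Algebra_add__canonical__SemiGroup_ComLaw R (z j) 0 = z j + 0 by [].
by rewrite addr0 subrr; exact: (U0 lh HU).
Qed.

Definition rr n := epsilon (inhabits (0 : R)) (fun r => K y n = r * y n).
Lemma rr_spec n : K y n = rr n * y n.
Proof. exact: (epsilon_spec (inhabits 0) _ (Kin Hs y n)). Qed.

Lemma nat_exchange : exists g : nat -> R,
  (forall n, idempotent (g n)) /\ (forall n, in_left_principal (g n) (y n)) /\
  (forall i j, i <> j -> g i * g j = 0) /\ summable_to B g 1.
Proof.
have [u Hu] : summable B (c y).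
  have [u Hu] := proj2 Hn nat y (fun n => e y n * rr n) (ex_intro _ 1 hy).
  exists u; apply: summable_ext Hu => n; by rewrite /c rr_spec mulrA.
have Hunit : is_unit u.
  apply: (Hlim (le := fun a b => is_true (a <= b)%N) (x := V y)).
  - split; first by exists 0%N.
    split; first by move=> a; exact: leqnn.
    split; first by move=> a b d; exact: leq_trans.
    by move=> a b; exists (maxn a b); rewrite leq_maxl leq_maxr.
  - move=> n; rewrite -(VT Hs); apply: unit_mul; [exact: (T_unit Hs) | exact: (Ww_unit Hs)].
  - move=> U HU.
    have [N1 H1] := partial_conv Hu HU.
    have [N2 H2] := partial_conv hy HU.
    exists (maxn N1 N2) => n Hn'.
    have Hn1 : (N1 <= n)%N by exact: leq_trans (leq_maxl _ _) Hn'.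
    have Hn2 : (N2 <= n)%N by exact: leq_trans (leq_maxr _ _) Hn'.
    rewrite /V addrAC; apply: (UD lh HU (H1 n Hn1)).
    rewrite /M mulrA; apply: (UM lh _ HU).
    have := UN lh HU (H2 n Hn2); by rewrite opprB.
have [w [Huw Hwu]] := Hunit.
have Heu : forall j, e y j * u = c y j.
  move=> j; apply: (sum_unique lh (summable_lmul lh (e y j) Hu)).
  have -> : c y j = e y j * c y j by rewrite /c mulrA (eidem Hs).
  apply: single_sum => i Hij.
  by rewrite /c mulrA (eorth Hs) 1?eq_sym // mul0r.
have Hw : forall a b, w * (a * u) * (w * (b * u)) = w * (a * b * u).
  by move=> a b; rewrite !mulrA -(mulrA (w * a) u w) Huw mulr1.
exists (fun n => w * c y n); split; [|split; [|split]].
- move=> n; rewrite /idempotent -Heu.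
  by rewrite Hw (eidem Hs).
- move=> n; exists (w * e y n * rr n); by rewrite /c rr_spec !mulrA.
- move=> i j Hij; rewrite -!Heu.
  rewrite Hw (eorth Hs) ?mul0r ?mulr0 //.
  by apply/eqP.
- by rewrite -Hwu; apply: summable_lmul.
Qed.

End Final.
Section Transfer.
Variable R : pzRingType.
Variable B : (R -> Prop) -> Prop.
Variable I : Type.
Variable idx : I -> nat.
Hypothesis Hidx : forall i j, idx i = idx j -> i = j.

Definition inv (n : nat) : option I :=
  epsilon (inhabits None) (fun o => match o with
     Some i => idx i = n | None => forall i, idx i <> n end).

Lemma inv_spec n : match inv n with Some i => idx i = n | None => forall i, idx i <> n end.
Proof.
apply: (epsilon_spec (inhabits None) (fun o => match o with
     Some i => idx i = n | None => forall i, idx i <> n end)).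
case: (classic (exists i, idx i = n)) => [[i Hi]|H].
- by exists (Some i).
- by exists None => i Hi; apply: H; exists i.
Qed.

Lemma inv_idx i : inv (idx i) = Some i.
Proof.
have := inv_spec (idx i); case: (inv (idx i)) => [j /Hidx -> //|H].
by case: (H i).
Qed.

Lemma inv_Some n i : inv n = Some i -> idx i = n.
Proof. by have := inv_spec n; case: (inv n) => [j Hj [<-]|]. Qed.

Variable x : I -> R.
Definition yy (n : nat) : R := if inv n is Some i then x i else 0.

Lemma sum_pmap (s : seq nat) : \sum_(n <- s) yy n = \sum_(i <- pmap inv s) x i.
Proof.
elim: s => [|a s IH]; first by rewrite !big_nil.
rewrite big_cons /= /yy; case: (inv a) => [i|] /=; first by rewrite big_cons IH.
by rewrite add0r IH.
Qed.

Lemma NoDup_pmap_inv (s : seq nat) : NoDup s -> NoDup (pmap inv s).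
Proof.
elim: s => [|a s IH] H /=; first by constructor.
inversion H; subst.
case E: (inv a) => [i|] /=; last by auto.
constructor; last by auto.
move/In_pmap => [n [Hn Hi]].
have := inv_Some E; have := inv_Some Hi => -> Ha; subst; auto.
Qed.

Lemma transfer1 : summable_to B x 1 -> summable_to B yy 1.
Proof.
move=> H U HU; have [F' [HF' HF]] := H U HU.
exists (map idx F'); split; first exact: NoDup_map_inj.
move=> FN HnF HinF; rewrite sum_pmap; apply: HF; first exact: NoDup_pmap_inv.
move=> i Hi; apply/In_pmap; exists (idx i); split; last exact: inv_idx.
apply: HinF; apply/In_map; by exists i.
Qed.

Definition isNone (o : option I) : bool := if o is None then true else false.

Lemma transfer2 (g : nat -> R) : (forall n, in_left_principal (g n) (yy n)) ->
  summable_to B g 1 -> summable_to B (fun i => g (idx i)) 1.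
Proof.
move=> Hg H U HU; have [F' [HF' HF]] := H U HU.
have Hg0 : forall n, isNone (inv n) -> g n = 0.
  move=> n; have [r ->] := Hg n; rewrite /yy; case: (inv n) => //= _.
  by rewrite mulr0.
exists (pmap inv F'); split; first exact: NoDup_pmap_inv.
move=> FI HnF HinF.
set G := filter (fun n => isNone (inv n)) F'.
have HG : \sum_(n <- G) g n = 0.
  by apply: big1_seq => n /andP [_]; rewrite mem_filter => /andP [/Hg0].
have := HF (map idx FI ++ G).
rewrite big_cat big_map HG Monoid.mulm1; apply.
- apply: NoDup_cat; [exact: NoDup_map_inj | exact: NoDup_filter |].
  move=> n /In_map [i [_ <-]] /In_filter [_].
  by rewrite inv_idx.
- move=> n Hn; apply/In_cat; case E: (inv n) => [i|].
  + left; apply/In_map; exists i; split; last exact: inv_Some E.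
    apply: HinF; apply/In_pmap; by exists n.
  + right; apply/In_filter; by rewrite E.
Qed.

End Transfer.

Theorem theorem1 (R : pzRingType) (B : (R -> Prop) -> Prop) :
  suitable R -> nice B -> limits_of_units_are_units B -> aleph0_exchange B.
Proof.
move=> Hs Hn Hlim I x [idx Hidx] hx.
have hy := transfer1 Hidx hx.
have [g [G1 [G2 [G3 G4]]]] := nat_exchange Hs Hn Hlim hy.
exists (fun i => g (idx i)); split; [|split; [|split]].
- by move=> i; apply: G1.
- move=> i; have [r Hr] := G2 (idx i); exists r; rewrite Hr /yy (inv_idx Hidx) //.
- by move=> i j Hij; apply: G3 => /Hidx.
- exact (transfer2 Hidx G2 G4).
Qed.
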